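(* Let $D\ge1$, let $Q_D$ be the $D$-dimensional hypercube on $X=\{0,1\}^D$ with adjacency matrix $A$. For $1\le i<j\le D$ put $B_{ij}=\alpha^*_iA\alpha^*_j-\alpha^*_jA\alpha^*_i$, and let $1\le \ell\le D$. (i) If $\ell=i$ or $\ell=j$, then $B_{ij}\alpha_\ell=-\alpha_\ell B_{ij}$. (ii) If $\ell\ne i$ and $\ell\ne j$, then $B_{ij}\alpha_\ell=\alpha_\ell B_{ij}$.
   Context: $Q_D$ is the graph with vertex set $X=\{0,1\}^D$, two vertices adjacent iff they differ in exactly one coordinate. Matrices are real with rows and columns indexed by $X$. For $1\le i\le D$, $\alpha_i$ has $(x,y)$-entry $1$ if $x,y$ differ in the $i$-th coordinate and agree in all others, and $0$ otherwise; $\alpha^*_i$ is the diagonal matrix with $(x,x)$-entry $1$ if $x_i=0$ and $-1$ if $x_i=1$. *)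

(* Defs.v *)
From mathcomp Require Import all_boot all_order all_algebra.
From mathcomp Require Import reals.
Set Implicit Arguments. Unset Strict Implicit. Unset Printing Implicit Defensive.
Import GRing.Theory Num.Theory.
Local Open Scope ring_scope.

(* Vertex set X = {0,1}^D, coordinates indexed by 'I_D (coordinate i+1 of the
   paper is index i : 'I_D here). *)
Definition cube (D : nat) : finType := {ffun 'I_D -> bool}.

(* Real matrices with rows and columns indexed by X, via the enumeration of X. *)
Notation Xmat R D := 'M[R]_#|cube D|.

Definition xv D (k : 'I_#|cube D|) : cube D := enum_val k.

Definition cube_adj D (x y : cube D) : bool := #|[set k | x k != y k]| == 1%N.

Definition adjA (R : realType) D : Xmat R D :=
  \matrix_(a, b) (cube_adj (xv a) (xv b))%:R.

Definition alpha (R : realType) D (i : 'I_D) : Xmat R D :=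
  \matrix_(a, b) ([forall k, (xv a k != xv b k) == (k == i)])%:R.

(* alpha*_i : diagonal, entry 1 if x_i = 0 (false), -1 if x_i = 1 (true) *)
Definition alpha_star (R : realType) D (i : 'I_D) : Xmat R D :=
  \matrix_(a, b) (if a == b then (if xv a i then -1 else 1) else 0).

Definition Bmat (R : realType) D (i j : 'I_D) : Xmat R D :=
  alpha_star R i *m adjA R D *m alpha_star R j
  - alpha_star R j *m adjA R D *m alpha_star R i.

(* Main.v *)
Require Import Defs.
From mathcomp Require Import all_boot all_order all_algebra.
From mathcomp Require Import reals.
Local Open Scope ring_scope.
Import GRing.Theory.

Section S.
Variables (R : realType) (D : nat).

Definition flip (l : 'I_D) (x : cube D) : cube D :=
  [ffun k => if k == l then ~~ x k else x k].

Lemma flipK l : involutive (flip l).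
Proof. by move=> x; apply/ffunP => k; rewrite !ffunE; case: (k == l); rewrite ?negbK. Qed.

Definition fr l (a : 'I_#|cube D|) := enum_rank (flip l (xv a)).

Lemma frK l : involutive (fr l).
Proof. by move=> a; rewrite /fr /xv enum_rankK flipK enum_valK. Qed.

Lemma alphaE l a b : alpha R l a b = (b == fr l a)%:R.
Proof.
rewrite mxE; congr (_%:R); congr (nat_of_bool _); apply/fintype.forallP/eqP.
  move=> H; apply: enum_val_inj; rewrite /fr enum_rankK; apply/ffunP => k.
  rewrite ffunE; move: (H k); rewrite /xv.
  by case: (k == l); case: (enum_val a k); case: (enum_val b k).
move=> -> k; rewrite /fr /xv enum_rankK ffunE.
by case: (k == l); case: (enum_val a k).
Qed.

Lemma mulmx_alpha (M : Xmat R D) l a b : (M *m alpha R l) a b = M a (fr l b).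
Proof.
rewrite mxE (bigD1 (fr l b)) //= alphaE frK eqxx mulr1 big1 ?addr0 // => c Hc.
rewrite alphaE; case: eqP => [Eb|_]; last by rewrite mulr0.
by rewrite Eb frK eqxx in Hc.
Qed.

Lemma alpha_mulmx (M : Xmat R D) l a b : (alpha R l *m M) a b = M (fr l a) b.
Proof.
rewrite mxE (bigD1 (fr l a)) //= alphaE eqxx mul1r big1 ?addr0 // => c Hc.
by rewrite alphaE (negbTE Hc) mul0r.
Qed.

Lemma adj_flip l (x y : cube D) : cube_adj x (flip l y) = cube_adj (flip l x) y.
Proof.
rewrite /cube_adj.
have -> : [set k | x k != flip l y k] = [set k | flip l x k != y k].
  apply/finset.setP => k; rewrite !inE !ffunE.
  by case: (k == l); case: (x k); case: (y k).
by [].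
Qed.

Lemma adjC l : adjA R D *m alpha R l = alpha R l *m adjA R D.
Proof.
apply/matrixP => a b; rewrite mulmx_alpha alpha_mulmx !mxE /fr /xv !enum_rankK.
by rewrite adj_flip.
Qed.

Definition eps (m l : 'I_D) : R := if m == l then -1 else 1.

Lemma starC m l :
  alpha_star R m *m alpha R l = eps m l *: (alpha R l *m alpha_star R m).
Proof.
apply/matrixP => a b; rewrite mulmx_alpha [RHS]mxE alpha_mulmx !mxE.
rewrite (_ : (a == fr l b) = (fr l a == b)); last first.
  by apply/eqP/eqP => [->|<-]; rewrite frK.
case: eqP => [_ | _]; last by rewrite mulr0.
rewrite /fr /xv enum_rankK ffunE /eps.
by case: (m == l); case: (enum_val a m); rewrite ?mul1r ?mulN1r ?opprK.
Qed.

Lemma triple i j l :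
  alpha_star R i *m adjA R D *m alpha_star R j *m alpha R l =
  (eps i l * eps j l) *: (alpha R l *m (alpha_star R i *m adjA R D *m alpha_star R j)).
Proof.
rewrite -mulmxA starC -scalemxAr (mulmxA _ (alpha R l)).
rewrite -(mulmxA (alpha_star R i)) adjC mulmxA starC -!scalemxAl.
by rewrite scalerA mulrC !mulmxA.
Qed.

End S.
Arguments eps {R D}.

Theorem lemma9p4 (R : realType) (D : nat) (i j l : 'I_D) :
  (1 <= D)%N -> (i < j)%N ->
  ((l = i \/ l = j) ->
     Bmat R i j *m alpha R l = - (alpha R l *m Bmat R i j)) /\
  ((l <> i /\ l <> j) ->
     Bmat R i j *m alpha R l = alpha R l *m Bmat R i j).
Proof.
move=> _ ltij.
have E : Bmat R i j *m alpha R l =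
    (eps i l * eps j l) *: (alpha R l *m Bmat R i j).
  rewrite /Bmat mulmxBl mulmxBr !triple scalerBr; congr (_ - _); by rewrite mulrC.
have nij : i != j by rewrite neq_ltn ltij.
rewrite E /eps; split.
  have nji : (j == i) = false by rewrite eq_sym (negbTE nij).
  case=> ?; subst l; rewrite eqxx ?nji ?(negbTE nij).
    by rewrite mulr1 scaleN1r.
  by rewrite mul1r scaleN1r.
case=> /eqP H1 /eqP H2; rewrite eq_sym (negbTE H1) eq_sym (negbTE H2).
by rewrite mulr1 scale1r.
Qed.
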